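(* Let $G=(V,E)$ be a finite graph and let $\xi$ be an integer-valued random variable such that the random permutation has cycle length bounded by $\xi$ on $(V,E)$. Let $(\xi_n)_{n\in\mathbb N}$ be independent copies of $\xi$. Then for each $A \subset V$ and each $\ell \in \mathbb N$, $$\mathbb P_V(|\mathrm{Or}(A)| \geq \ell) \leq \mathbb P\Big(\sum_{i=1}^{|A|} \xi_i \geq \ell\Big).$$
   Context: For $U\subset V$, $\mathcal S_U$ is the set of bijections $\pi:U\to U$ with $\pi(x)=x$ or $\{x,\pi(x)\}\in E$; $\mathbb P_U(\pi)=e^{-\alpha\sum_{x\in U}\mathbb 1\{\pi(x)\neq x\}}/Z(U)$. $\gamma_x$ is the cycle of $\pi$ containing $x$ and $|\gamma_x|$ its number of vertices. The random permutation has cycle length bounded by $\xi$ on $(V,E)$ if for all $\ell\ge1$, $\sup_{U\subset V\text{ finite}}\sup_{x\in U}\mathbb P_U(|\gamma_x|\ge\ell)\le\mathbb P(\xi\ge\ell)$. $\mathrm{Or}(A)=\mathrm{Or}_\pi(A)=\{\pi^j(x):x\in A,j\in\mathbb N\}$. *)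

(* Defs.v *)
From HB Require Import structures.
From mathcomp Require Import all_boot all_order all_algebra all_fingroup.
From mathcomp Require Import all_classical all_reals all_analysis.
Set Implicit Arguments. Unset Strict Implicit. Unset Printing Implicit Defensive.
Import Order.TTheory GRing.Theory Num.Theory.
Local Open Scope classical_set_scope.
Local Open Scope ring_scope.

Section RandomPermutation.
Variables (R : realType) (V : finType) (E : rel V) (alpha : R).

(* S_U : bijections of U (= permutations of V supported in U) moving every
   vertex either nowhere or to a neighbour. *)
Definition graph_perm (U : {set V}) (s : {perm V}) : bool :=
  perm_on U s && [forall x, (s x == x) || E x (s x)].

Definition perm_weight (U : {set V}) (s : {perm V}) : R :=
  expR (- alpha * (#|[set x in U | s x != x]|)%:R).

Definition partition_fn (U : {set V}) : R :=
  \sum_(s | graph_perm U s) perm_weight U s.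

Definition PU (U : {set V}) (Ev : pred {perm V}) : R :=
  (\sum_(s | graph_perm U s && Ev s) perm_weight U s) / partition_fn U.

Definition cycle_len (s : {perm V}) (x : V) : nat := #|porbit s x|.

Definition Or (s : {perm V}) (A : {set V}) : {set V} :=
  \bigcup_(x in A) porbit s x.
End RandomPermutation.

Definition cycle_length_bounded_by (R : realType) (V : finType) (E : rel V)
    (alpha : R) (d : measure_display) (T : measurableType d)
    (P : probability T R) (xi : T -> R) : Prop :=
  forall l : nat, (1 <= l)%N ->
  forall (U : {set V}) (x : V), x \in U ->
    ((PU E alpha U (fun s => l <= cycle_len s x)%N)%:E
       <= P [set t | (l%:R <= xi t)%R])%E.

Definition mutually_independent (R : realType) (d : measure_display)
    (T : measurableType d) (P : probability T R) (X : nat -> T -> R) : Prop :=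
  forall (I : seq nat) (B : nat -> set R), uniq I ->
    (forall i, measurable (B i)) ->
    P (\big[setI/setT]_(i <- I) (X i @^-1` B i))
      = (\big[*%E/1%E]_(i <- I) P (X i @^-1` B i))%E.

Definition same_distribution (R : realType) (d d' : measure_display)
    (T : measurableType d) (T' : measurableType d')
    (P : probability T R) (X : T -> R) (P' : probability T' R) (Y : T' -> R)
    : Prop :=
  forall B : set R, measurable B -> P (X @^-1` B) = P' (Y @^-1` B).

(* Main.v *)
Require Import Defs.
From HB Require Import structures.
From mathcomp Require Import all_boot all_order all_algebra all_fingroup.
From mathcomp Require Import all_classical all_reals all_analysis.
From mathcomp Require Import ring zify.
From Stdlib Require Import Lia.
Import Order.TTheory GRing.Theory Num.Theory.
Local Open Scope classical_set_scope.
Local Open Scope ring_scope.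
Set Implicit Arguments. Unset Strict Implicit. Unset Printing Implicit Defensive.
Section Disc.
Variables (R : realType) (V : finType) (E : rel V) (alpha : R).

Local Notation gp := (graph_perm E).
Local Notation w := (@perm_weight R V alpha).
Local Notation PU := (@PU R V E alpha).
Local Notation Z := (@partition_fn R V E alpha).

Lemma w_gt0 U s : 0 < w U s.
Proof. by rewrite /perm_weight expR_gt0. Qed.

Lemma perm_onI (S : {set V}) (s : {perm V}) :
  (forall y, s y != y -> y \in S) -> perm_on S s.
Proof. by move=> h; change ([pred x | s x != x] \subset S); apply/fintype.subsetP => y; rewrite inE => /h. Qed.

Lemma perm_onE (S : {set V}) (s : {perm V}) y :
  perm_on S s -> s y != y -> y \in S.
Proof. by move=> sS; have /fintype.subsetP h : [pred x | s x != x] \subset S := sS; move=> ny; apply: h; rewrite inE. Qed.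

Lemma gp1 U : gp U 1.
Proof.
rewrite /graph_perm; apply/andP; split.
  exact: perm_on1.
by apply/forallP => y; rewrite perm1 eqxx.
Qed.

Lemma Z_gt0 U : 0 < Z U.
Proof.
rewrite /partition_fn (bigD1 1%g) ?gp1 //=.
apply: (lt_le_trans (w_gt0 U 1%g)); rewrite lerDl.
by apply: sumr_ge0 => s _; apply: ltW (w_gt0 _ _).
Qed.

Lemma eq_PU U (e1 e2 : pred {perm V}) : e1 =1 e2 -> PU U e1 = PU U e2.
Proof. by move=> h; rewrite /PU; congr (_ / _); apply: eq_bigl => s; rewrite h. Qed.

Lemma PU_ge0 U e : 0 <= PU U e.
Proof.
rewrite /PU divr_ge0 ?(ltW (Z_gt0 U)) //.
by apply: sumr_ge0 => s _; apply: ltW (w_gt0 _ _).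
Qed.

Lemma PU_F U (e : pred {perm V}) : (forall s, gp U s -> ~~ e s) -> PU U e = 0.
Proof.
move=> h; rewrite /PU big_pred0 ?mul0r // => s.
by case g: (gp U s) => //=; apply/negbTE/h.
Qed.

Lemma PU_T U (e : pred {perm V}) : (forall s, gp U s -> e s) -> PU U e = 1.
Proof.
move=> h; rewrite /PU (eq_bigl (gp U)) ?divff ?(gt_eqF (Z_gt0 U)) //.
by move=> s; case g: (gp U s) => //=; rewrite h.
Qed.

Lemma PU_mulb U (e : pred {perm V}) (b : bool) :
  PU U (fun s => e s && b) = PU U e * b%:R.
Proof.
case: b; first by rewrite mulr1; apply: eq_PU => s; rewrite andbT.
by rewrite mulr0; apply: PU_F => s _; rewrite andbF.
Qed.

Lemma PU_partition x U (e : pred {perm V}) :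
  PU U e = \sum_(C : {set V}) PU U (fun s => (porbit s x == C) && e s).
Proof.
rewrite /PU -mulr_suml; congr (_ / _).
rewrite (partition_big (fun s => porbit s x) predT) //=.
by apply: eq_bigr => C _; apply: eq_bigl => s; rewrite -andbA (andbC (e s)).
Qed.

Lemma iter_stable (s : {perm V}) (D : {set V}) a i :
  (forall y, y \in D -> s y \in D) -> a \in D -> (s ^+ i)%g a \in D.
Proof.
move=> sD aD; elim: i => [|i IH]; first by rewrite expg0 perm1.
by rewrite expgSr permM sD.
Qed.

Lemma porbit_sub (s : {perm V}) (D : {set V}) a :
  (forall y, y \in D -> s y \in D) -> a \in D -> porbit s a \subset D.
Proof. by move=> sD aD; apply/fintype.subsetP => y /porbitP [i ->]; apply: iter_stable. Qed.

Lemma porbit_agree (s r : {perm V}) (D : {set V}) a :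
  (forall y, y \in D -> s y = r y) -> (forall y, y \in D -> r y \in D) ->
  a \in D -> porbit s a = porbit r a.
Proof.
move=> sr rD aD.
have H i : (s ^+ i)%g a = (r ^+ i)%g a.
  elim: i => [|i IH]; first by rewrite !expg0 !perm1.
  by rewrite !expgSr !permM IH sr // iter_stable.
by apply/setP => y; apply/porbitP/porbitP => -[i ->]; exists i; rewrite H.
Qed.

Lemma mul_on (t r : {perm V}) (C : {set V}) :
  perm_on C t -> perm_on (~: C) r ->
  forall y, (t * r)%g y = if y \in C then t y else r y.
Proof.
move=> tC rC y; rewrite permM; case: ifP => yC.
  by rewrite (out_perm rC) // inE negbK (perm_closed _ tC) yC.
by rewrite (out_perm tC) ?yC.
Qed.

Lemma restr_val (s : {perm V}) (C : {set V}) y :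
  (s \in 'N(C | 'P))%g -> restr_perm C s y = if y \in C then s y else y.
Proof.
move=> sN; case: ifP => yC; first exact: restr_permE.
by rewrite (out_perm (restr_perm_on C s)) ?yC.
Qed.

Lemma porbit_norm (s : {perm V}) x : (s \in 'N(porbit s x | 'P))%g.
Proof.
apply/astabsP => y /=; have ->: aperm y s = s y by [].
have E1: porbit s (s y) = porbit s y by have := porbit_perm s 1 y; rewrite expg1.
by rewrite porbit_sym -eq_porbit_mem E1 eq_porbit_mem porbit_sym.
Qed.


Section Split.
Variables (U C : {set V}) (x : V).
Hypotheses (CU : C \subset U) (xC : x \in C).

Lemma fwd (t r : {perm V}) :
  gp C t -> porbit t x = C -> gp (U :\: C) r ->
  [/\ gp U (t * r)%g, porbit (t * r)%g x = C,
      restr_perm C (t * r)%g = t & restr_perm (~: C) (t * r)%g = r].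
Proof.
case/andP => tC /forallP tE tx; case/andP => rUC /forallP rE.
have rC : perm_on (~: C) r.
  by apply: perm_onI => y /(perm_onE rUC); rewrite !inE => /andP[].
have sE := mul_on tC rC.
have tCC y : y \in C -> t y \in C by move=> yC; rewrite (perm_closed _ tC).
have so : porbit (t * r)%g x = C.
  by rewrite -[RHS]tx; apply: (porbit_agree (D := C)) => // y yC; rewrite sE yC.
have sN : ((t * r)%g \in 'N(C | 'P))%g by rewrite -{1}so porbit_norm.
split => //.
- apply/andP; split.
    apply: perm_onI => y; rewrite sE; case: ifP => yC.
      by move=> _; apply: (fintype.subsetP CU).
    by move/(perm_onE rUC); rewrite inE => /andP[].
  by apply/forallP => y; rewrite sE; case: ifP => _; [apply: tE | apply: rE].
- apply/permP => y; rewrite restr_val // sE.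
  by case yC: (y \in C); rewrite // (out_perm tC) ?yC.
- have sN' : ((t * r)%g \in 'N(~: C | 'P))%g by rewrite astabsC.
  apply/permP => y; rewrite restr_val // sE inE.
  by case yC: (y \in C); rewrite //= (out_perm rC) // inE negbK.
Qed.

Lemma bwd (s : {perm V}) :
  gp U s -> porbit s x = C ->
  [/\ gp C (restr_perm C s), porbit (restr_perm C s) x = C,
      gp (U :\: C) (restr_perm (~: C) s) &
      (restr_perm C s * restr_perm (~: C) s)%g = s].
Proof.
case/andP => sU /forallP sE so.
have sN : (s \in 'N(C | 'P))%g by rewrite -so porbit_norm.
have sN' : (s \in 'N(~: C | 'P))%g by rewrite astabsC.
have tv y := @restr_val s C y sN; have rv y := @restr_val s (~: C) y sN'.
have sCC y : y \in C -> s y \in C.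
  by move=> yC; move/astabsP: sN => /(_ y) /= ->.
split.
- apply/andP; split; first exact: restr_perm_on.
  apply/forallP => y; rewrite tv; case: ifP => _; [exact: sE | by rewrite eqxx].
- rewrite -[RHS]so; apply: (porbit_agree (D := C) _ sCC xC).
  by move=> y yC; rewrite tv yC.
- apply/andP; split.
    apply: perm_onI => y; rewrite rv !inE; case: (y \in C) => //=; first by rewrite eqxx.
    by move/(perm_onE sU) ->.
  apply/forallP => y; rewrite rv; case: ifP => _; [exact: sE | by rewrite eqxx].
- apply/permP => y; rewrite (mul_on (restr_perm_on _ _) (restr_perm_on _ _)) tv rv inE.
  by case: (y \in C).
Qed.

Lemma sum_split (F : {perm V} -> R) :
  \sum_(s | gp U s && (porbit s x == C)) F s =
  \sum_(t | gp C t && (porbit t x == C)) \sum_(r | gp (U :\: C) r) F (t * r)%g.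
Proof.
rewrite pair_big_dep /=.
rewrite (reindex_onto (fun p : {perm V} * {perm V} => (p.1 * p.2)%g)
          (fun s => (restr_perm C s, restr_perm (~: C) s))) /=; last first.
  by move=> s /andP[gs /eqP so]; case: (bwd gs so).
apply: eq_bigl => -[t r] /=; apply/idP/idP.
  case/andP => /andP[gs /eqP so] /eqP [Et Er].
  case: (bwd gs so); rewrite Et Er => -> -> -> _.
  by rewrite eqxx.
case/andP => /andP[gt /eqP tx] gr.
case: (fwd gt tx gr) => -> -> -> ->.
by rewrite !eqxx.
Qed.

Lemma weight_split (t r : {perm V}) :
  perm_on C t -> perm_on (U :\: C) r ->
  w U (t * r)%g = w C t * w (U :\: C) r.
Proof.
move=> tC rUC.
have rC : perm_on (~: C) r.
  by apply: perm_onI => y /(perm_onE rUC); rewrite !inE => /andP[].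
have sE := mul_on tC rC.
rewrite /perm_weight -expRD -mulrDr -natrD; congr (expR (_ * _%:R)).
rewrite -(cardsID C [set y in U | (t * r)%g y != y]); congr (_ + _).
  apply: eq_card => y; rewrite !inE sE; case: ifP; rewrite ?andbT ?andbF //.
  by move=> yC; rewrite (fintype.subsetP CU).
apply: eq_card => y; rewrite !inE sE; case: ifP => yC; rewrite /= ?andbF ?andbT // andbC.
Qed.

Lemma Or_split (A : {set V}) (t r : {perm V}) :
  x \in A -> gp C t -> porbit t x = C -> gp (U :\: C) r ->
  #|Or (t * r)%g A| = #|C| + #|Or r (A :\: C)|.
Proof.
move=> xA gt tx gr; case: (fwd gt tx gr) => _ sx _ _.
case/andP: gt => tC _; case/andP: gr => rUC _.
have rC : perm_on (~: C) r.
  by apply: perm_onI => y /(perm_onE rUC); rewrite !inE => /andP[].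
have sE := mul_on tC rC.
have rCC y : y \in ~: C -> r y \in ~: C by rewrite (perm_closed _ rC).
have sa a : a \notin C -> porbit (t * r)%g a = porbit r a.
  move=> aC; apply: (porbit_agree (D := ~: C)) => //; last by rewrite inE.
  by move=> y; rewrite inE sE => /negbTE ->.
have OE : Or (t * r)%g A = C :|: Or r (A :\: C).
  apply/setP => y; rewrite inE; apply/bigcupP/orP.
    case=> a aA ya; case aC: (a \in C).
      by left; rewrite -sx -(eqP (_ : porbit (t * r)%g a == porbit (t * r)%g x)) // eq_porbit_mem sx.
    by right; apply/bigcupP; exists a; [rewrite inE aC aA | rewrite -sa ?aC].
  case=> [yC | /bigcupP [a]]; first by exists x => //; rewrite sx.
  by rewrite inE => /andP[aC aA] ya; exists a => //; rewrite sa.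
rewrite OE cardsU.
suff ->: C :&: Or r (A :\: C) = finset.set0 by rewrite cards0 subn0.
apply/setP => y; rewrite !inE; apply/negbTE; apply/andP => -[yC /bigcupP [a]].
rewrite inE => /andP[aC _] ya.
have aC' : a \in ~: C by rewrite inE.
by have := fintype.subsetP (porbit_sub rCC aC') y ya; rewrite inE yC.
Qed.

Lemma PU_cond (A : {set V}) (m : nat) : x \in A ->
  PU U (fun s => (porbit s x == C) && (m <= #|Or s A|)%N) =
  PU U (fun s => porbit s x == C) *
  PU (U :\: C) (fun r => m - #|C| <= #|Or r (A :\: C)|)%N.
Proof.
move=> xA.
set a := \sum_(t | gp C t && (porbit t x == C)) w C t.
have key (f h : pred {perm V}) :
  (forall t r, gp C t -> porbit t x = C -> gp (U :\: C) r -> f (t * r)%g = h r) ->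
  \sum_(s | gp U s && ((porbit s x == C) && f s)) w U s =
  a * \sum_(r | gp (U :\: C) r && h r) w (U :\: C) r.
  move=> fh.
  rewrite (eq_bigl (fun s => (gp U s && (porbit s x == C)) && f s)); last first.
    by move=> s; rewrite andbA.
  rewrite big_mkcondr sum_split /a mulr_suml; apply: eq_bigr => t.
  move=> /andP[gt /eqP tx]; rewrite mulr_sumr [RHS]big_mkcondr; apply: eq_bigr => r gr.
  rewrite (fh t r gt tx gr); case: (h r); rewrite ?mulr0 //.
  by apply: weight_split; [case/andP: gt | case/andP: gr].
have k1 := key (fun s => m <= #|Or s A|)%N (fun r => m - #|C| <= #|Or r (A :\: C)|)%N.
have k2 := key (fun _ => true) (fun _ => true).
have Z'0 : Z (U :\: C) != 0 by rewrite gt_eqF ?Z_gt0.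
have e2 : \sum_(s | gp U s && (porbit s x == C)) w U s = a * Z (U :\: C).
  rewrite /partition_fn -(eq_bigl _ _ (fun r => andbT (gp (U :\: C) r))) -k2 //.
  by apply: eq_bigl => s; rewrite andbT.
rewrite /PU e2 k1; last first.
  by move=> t r gt tx gr; rewrite /= (Or_split xA gt tx gr) leq_subLR.
by field; rewrite Z'0 gt_eqF ?Z_gt0.
Qed.

End Split.


Section Main.
Variables (q : nat -> R) (L : nat).
Hypothesis q_ge0 : forall k, 0 <= q k.

Fixpoint Dn (n m : nat) {struct n} : R :=
  if n is n'.+1 then \sum_(0 <= k < L) q k.+1 * Dn n' (m - k.+1)
  else (m == 0%N)%:R.

Definition Tq (j : nat) : R := \sum_(j <= k < L) q k.+1.

Lemma Dn_ge0 n m : 0 <= Dn n m.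
Proof.
elim: n m => [|n IH] m /=; first by rewrite ler0n.
by apply: sumr_ge0 => k _; rewrite mulr_ge0.
Qed.

Lemma Dn_anti n m1 m2 : (m1 <= m2)%N -> Dn n m2 <= Dn n m1.
Proof.
elim: n m1 m2 => [|n IH] m1 m2 le /=.
  case: m2 le => [|m2]; first by rewrite leqn0 => /eqP ->.
  by move=> _; rewrite ler0n.
apply: ler_sum => k _; apply: ler_wpM2l => //; apply: IH.
exact: leq_sub2r.
Qed.

Lemma Dn_0 n : 1 <= Tq 0 -> 1 <= Dn n 0.
Proof.
move=> T0; elim: n => [|n IH] /=; first by [].
apply: (le_trans T0); rewrite /Tq; apply: ler_sum => k _.
by rewrite sub0n -{1}(mulr1 (q k.+1)) ler_wpM2l.
Qed.

Lemma abel (I : finType) (pi : I -> R) (c : I -> nat) (g : nat -> R) :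
  (forall i, 0 <= pi i) -> \sum_i pi i = 1 ->
  (forall j, (j < L)%N -> \sum_i pi i * (j < c i)%:R <= Tq j) ->
  (forall j, g j <= g j.+1) -> (forall k, (L <= k)%N -> g k = g L) ->
  0 <= g 0%N -> 1 <= Tq 0 ->
  \sum_i pi i * g (c i) <= \sum_(0 <= k < L) q k.+1 * g k.+1.
Proof.
move=> pi0 pi1 piT gi gL g0 T0.
pose d j := g j.+1 - g j.
have tele k : g k = g 0%N + \sum_(0 <= j < L) (j < k)%:R * d j.
  case: (leqP L k) => kL.
    rewrite (eq_big_nat _ _ (F2 := fun j => d j)); last first.
      by move=> j /andP[_ jL]; rewrite (leq_trans jL kL) mul1r.
    by rewrite telescope_sumr // gL // addrC subrK.
  rewrite (big_cat_nat _ (n := k)) //= ?(ltnW kL) //.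
  rewrite (eq_big_nat _ _ (F2 := fun j => d j)); last first.
    by move=> j /andP[_ jk]; rewrite jk mul1r.
  rewrite [X in _ + (_ + X)](eq_big_nat _ _ (F2 := fun j => 0)); last first.
    by move=> j /andP[kj _]; rewrite ltnNge kj mul0r.
  by rewrite [X in _ + (_ + X)]big1 // addr0 telescope_sumr // addrC subrK.
have LHS : \sum_i pi i * g (c i) =
    g 0%N + \sum_(0 <= j < L) d j * \sum_i pi i * (j < c i)%:R.
  under eq_bigr do rewrite tele mulrDr.
  rewrite big_split /= -mulr_suml pi1 mul1r; congr (_ + _).
  under eq_bigr do rewrite mulr_sumr.
  rewrite exchange_big; apply: eq_bigr => j _; rewrite mulr_sumr.
  by apply: eq_bigr => i _; ring.
have RHS : \sum_(0 <= k < L) q k.+1 * g k.+1 =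
    g 0%N * Tq 0 + \sum_(0 <= j < L) d j * Tq j.
  under eq_bigr do rewrite tele mulrDr.
  rewrite big_split /= -mulr_suml mulrC; congr (_ + _).
  under eq_bigr do rewrite mulr_sumr.
  rewrite exchange_big; apply: eq_big_nat => j /andP[_ jL].
  rewrite /Tq (big_cat_nat _ (n := j)) //= ?(ltnW jL) //.
  rewrite big1_seq ?add0r; last first.
    move=> k /andP[_]; rewrite mem_index_iota => /andP[_ kj].
    by rewrite ltnS leqNgt kj mul0r mulr0.
  rewrite mulr_sumr; apply: eq_big_nat => k /andP[jk _].
  by rewrite ltnS jk mul1r mulrC.
rewrite LHS RHS; apply: lerD.
  by rewrite -{1}(mulr1 (g 0%N)) ler_wpM2l.
apply: ler_sum_nat => j /andP[_ jL]; apply: ler_wpM2l; last exact: piT.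
by rewrite subr_ge0.
Qed.

Lemma Or0 (s : {perm V}) : #|Or s finset.set0| = 0%N.
Proof.
apply/eqP; rewrite cards_eq0; apply/eqP/setP => y; rewrite finset.in_set0.
by apply/bigcupP => -[a]; rewrite finset.in_set0.
Qed.

Lemma disc0 (U : {set V}) m : PU U (fun s => (m <= #|Or s finset.set0|)%N) <= Dn 0 m.
Proof.
rewrite /=; case m0: (m == 0%N).
  by rewrite PU_T // => s _; rewrite (eqP m0).
by rewrite PU_F // => s _; rewrite Or0 leqn0 m0.
Qed.

Hypothesis T0 : 1 <= Tq 0.
Hypothesis tail : forall j (U : {set V}) (x : V), (j < L)%N -> x \in U ->
  PU U (fun s => (j.+1 <= #|porbit s x|)%N) <= Tq j.

Lemma disc n : forall (U A : {set V}) m, A \subset U -> (#|A| <= n)%N -> (m <= L)%N ->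
  PU U (fun s => (m <= #|Or s A|)%N) <= Dn n m.
Proof.
elim: n => [|n IH] U A m AU An mL; have [A0|[x xA]] := set_0Vmem A.
- by rewrite A0; apply: disc0.
- have : (0 < #|A|)%N by apply/card_gt0P; exists x.
  by rewrite leqNgt in An; rewrite (negbTE An).
- rewrite A0; case m0: (m == 0%N).
    by rewrite PU_T ?(eqP m0) ?Dn_0.
  by rewrite PU_F ?Dn_ge0 // => s _; rewrite Or0 leqn0 m0.
have xU : x \in U := fintype.subsetP AU x xA.
rewrite (PU_partition x).
apply: (le_trans _ (abel (pi := fun C => PU U (fun s => porbit s x == C))
   (c := fun C : {set V} => #|C|) (g := fun j => Dn n (m - j)) _ _ _ _ _ _ T0)).
- apply: ler_sum => C _.
  case: (boolP ((x \in C) && (C \subset U))) => [/andP[xC CU] | H].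
    rewrite PU_cond //; apply: ler_wpM2l; first exact: PU_ge0.
    apply: IH.
    + exact: finset.setSD.
    + have := cardsID C A.
      have : (0 < #|A :&: C|)%N by apply/card_gt0P; exists x; rewrite inE xA xC.
      move: An; clear; lia.
    + exact: leq_trans (leq_subr _ _) mL.
  rewrite PU_F; first by apply: mulr_ge0; [exact: PU_ge0 | exact: Dn_ge0].
  move=> s /andP[sU _]; apply/negP => /andP[/eqP so _]; move: H.
  rewrite -so porbit_id /=; apply/negP/negPn; apply: porbit_sub => // y yU.
  by rewrite (perm_closed _ sU).
- by move=> C; apply: PU_ge0.
- rewrite -(PU_T (U := U) (e := predT)) // (PU_partition x).
  by apply: eq_bigr => C _; apply: eq_PU => s /=; rewrite andbT.
- move=> j jL.
  suff ->: \sum_(C : {set V}) PU U (fun s => porbit s x == C) * (j < #|C|)%:R =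
     PU U (fun s => (j.+1 <= #|porbit s x|)%N) by apply: tail.
  rewrite (PU_partition x); apply: eq_bigr => C _.
  rewrite -PU_mulb; apply: eq_PU => s /=.
  by case: eqP => // ->.
- by move=> j; apply: Dn_anti; apply: leq_sub2l.
- move=> k Lk /=.
  have h1 : (m - k = 0)%N by apply/eqP; rewrite subn_eq0 (leq_trans mL Lk).
  have h2 : (m - L = 0)%N by apply/eqP; rewrite subn_eq0.
  by rewrite h1 h2.
- exact: Dn_ge0.
Qed.

End Main.

End Disc.

Section PrGen.
Variables (R : realType) (d : measure_display) (T : measurableType d)
  (P : probability T R).

Definition pr (A : set T) : R := fine (P A).

Lemma prE A : measurable A -> P A = (pr A)%:E.
Proof. by move=> mA; rewrite /pr fineK // (fin_num_measure P A mA). Qed.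

Lemma pr_ge0 A : 0 <= pr A.
Proof. by rewrite /pr fine_ge0 // measure_ge0. Qed.

Lemma pr_le A B : measurable A -> measurable B -> A `<=` B -> pr A <= pr B.
Proof.
move=> mA mB AB; rewrite -lee_fin -(prE mA) -(prE mB).
exact: (le_measure P (mem_set mA) (mem_set mB) AB).
Qed.

Lemma pr_U A B : measurable A -> measurable B -> A `&` B = set0 ->
  pr (A `|` B) = pr A + pr B.
Proof.
move=> mA mB AB; rewrite /pr (measureU P mA mB AB) fineD //; exact: fin_num_measure.
Qed.

Lemma in_bigU (s : seq nat) (G : nat -> set T) t :
  (\big[setU/set0]_(k <- s) G k) t -> exists2 k, k \in s & G k t.
Proof.
elim: s => [|a s IH]; first by rewrite big_nil.
rewrite big_cons => -[Ga|/IH [k ks Gk]]; first by exists a; rewrite ?mem_head.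
by exists k; rewrite // in_cons ks orbT.
Qed.

Lemma pr_bigU (s : seq nat) (G : nat -> set T) : uniq s ->
  (forall k, measurable (G k)) ->
  (forall k k', k \in s -> k' \in s -> k != k' -> G k `&` G k' = set0) ->
  pr (\big[setU/set0]_(k <- s) G k) = \sum_(k <- s) pr (G k).
Proof.
elim: s => [|a s IH] /=; first by rewrite !big_nil /pr measure0.
case/andP => as_ us mG dG; rewrite !big_cons.
have mB : measurable (\big[setU/set0]_(k <- s) G k).
  by apply: bigsetU_measurable => k _.
have dj : G a `&` \big[setU/set0]_(k <- s) G k = set0.
  apply/seteqP; split => // t [Ga /in_bigU [k ks Gk]].
  have ak : a != k by apply: contraNneq as_ => ->.
  have := dG a k (mem_head _ _); rewrite in_cons ks orbT => /(_ isT ak).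
  by move/seteqP => [+ _] => /(_ t (conj Ga Gk)).
rewrite pr_U //; congr (_ + _); apply: IH => // k k' ks k's; apply: dG.
  by rewrite in_cons ks orbT.
by rewrite in_cons k's orbT.
Qed.

End PrGen.

Lemma mray (R : realType) (a : R) : measurable [set r : R | a <= r].
Proof.
rewrite (_ : [set r : R | a <= r] = [set` `[a, +oo[%R]); first exact: measurable_itv.
by apply/seteqP; split => r /=; rewrite in_itv /= andbT.
Qed.

Section Prob.
Variables (R : realType) (L : nat).

Definition Ck (k : nat) : set R :=
  if (k < L)%N then [set k%:R] else [set r | L%:R <= r].

Lemma mCk k : measurable (Ck k).
Proof. by rewrite /Ck; case: ifP => _; [exact: measurable_set1 | exact: mray]. Qed.

Lemma Ck_ge k r : (k <= L)%N -> Ck k r -> k%:R <= r.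
Proof.
rewrite /Ck; case: ifP => kL kL' /=; first by move->.
have -> : k = L by apply/eqP; rewrite eqn_leq kL' leqNgt kL.
by [].
Qed.

Lemma Ck_disj k k' : (k <= L)%N -> (k' <= L)%N -> k != k' -> Ck k `&` Ck k' = set0.
Proof.
move=> kL k'L kk; apply/seteqP; split => // r [].
rewrite /Ck; case: ifP => a; case: ifP => b /=.
- by move=> -> /eqP; rewrite eq_sym eqr_nat eq_sym (negbTE kk).
- by move=> ->; rewrite ler_nat leqNgt a.
- by move=> + h; rewrite h ler_nat leqNgt b.
- have e1 : k = L by apply/eqP; rewrite eqn_leq kL leqNgt a.
  have e2 : k' = L by apply/eqP; rewrite eqn_leq k'L leqNgt b.
  by move: kk; rewrite e1 e2 eqxx.
Qed.

Variables (d0 : measure_display) (T0 : measurableType d0) (P0 : probability T0 R)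
  (xi : T0 -> R).

Definition qk (k : nat) : R := pr P0 (xi @^-1` Ck k).

Variables (d : measure_display) (T : measurableType d) (P : probability T R)
  (xis : nat -> T -> R).
Hypotheses (mxis : forall n, measurable_fun setT (xis n))
  (same : forall n, same_distribution P (xis n) P0 xi)
  (indep : mutually_independent P xis).

Lemma mpre j (B : set R) : measurable B -> measurable (xis j @^-1` B).
Proof. by move=> mB; have := mxis j measurableT mB; rewrite setTI. Qed.

Definition FJ (J : seq nat) (B : nat -> set R) : set T :=
  \big[setI/setT]_(j <- J) (xis j @^-1` B j).

Lemma mFJ J B : (forall j, measurable (B j)) -> measurable (FJ J B).
Proof. by move=> mB; apply: bigsetI_measurable => j _; apply: mpre. Qed.

Definition upd (B : nat -> set R) i (C : set R) j := if j == i then C else B j.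

Lemma FJ_upd J B i C : i \notin J ->
  FJ (i :: J) (upd B i C) = xis i @^-1` C `&` FJ J B.
Proof.
move=> iJ; rewrite /FJ big_cons /upd eqxx; congr (_ `&` _).
apply: eq_big_seq => j jJ.
have /negbTE -> // : j != i by apply: contraNneq iJ => <-.
Qed.

Lemma pr_indep J B i C : uniq J -> i \notin J ->
  (forall j, measurable (B j)) -> measurable C ->
  pr P (FJ (i :: J) (upd B i C)) = pr P (xis i @^-1` C) * pr P (FJ J B).
Proof.
move=> uJ iJ mB mC.
have mB' j : measurable (upd B i C j) by rewrite /upd; case: ifP.
have uiJ : uniq (i :: J) by rewrite /= iJ uJ.
have hJ := indep uJ mB.
rewrite /pr; have := indep uiJ mB'; rewrite -/(FJ _ _) => ->.
rewrite big_cons {1}/upd eqxx.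
rewrite (eq_big_seq (fun j => P (xis j @^-1` B j))); last first.
  move=> j jJ; rewrite /upd.
  by have /negbTE -> : j != i by apply: contraNneq iJ => <-.
rewrite -hJ fineM //; first exact: fin_num_measure (mpre _ _).
exact: fin_num_measure (mFJ _ mB).
Qed.

Lemma msum (I : seq nat) : measurable_fun setT (fun t => \sum_(i <- I) xis i t).
Proof.
elim: I => [|i I IH].
  have -> : (fun t => \sum_(i <- [::]) xis i t) = cst 0.
    by apply/funext => t; rewrite big_nil.
  exact: measurable_cst.
have -> : (fun t => \sum_(j <- i :: I) xis j t) = xis i \+ (fun t => \sum_(j <- I) xis j t).
  by apply/funext => t; rewrite big_cons.
exact: measurable_realfun.measurable_funD.
Qed.

Definition Sev (I : seq nat) (m : nat) : set T :=
  [set t | m%:R <= \sum_(i <- I) xis i t].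

Lemma mS I m : measurable (Sev I m).
Proof. by have := msum I measurableT (mray m%:R); rewrite setTI. Qed.

Lemma prob_side (I : seq nat) : uniq I -> forall J B m, uniq J ->
  (forall i, i \in I -> i \notin J) -> (forall j, measurable (B j)) ->
  pr P (FJ J B) * Dn qk L (size I) m <= pr P (FJ J B `&` Sev I m).
Proof.
elim: I => [|i I IH] uI J B m uJ dIJ mB.
  rewrite /=; case m0: (m == 0%N).
    rewrite mulr1; apply: pr_le; [exact: mFJ | apply: measurableI; [exact: mFJ | exact: mS] |].
    by move=> t Ft; split => //; rewrite /Sev /= big_nil (eqP m0).
  by rewrite mulr0 pr_ge0.
case/andP: uI => iI uI.
have iJ : i \notin J by apply: dIJ; rewrite mem_head.
have mBu k : forall j, measurable (upd B i (Ck k) j).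
  by move=> j; rewrite /upd; case: ifP => _; [exact: mCk | exact: mB].
rewrite /= mulr_sumr.
pose G k := FJ (i :: J) (upd B i (Ck k.+1)) `&` Sev I (m - k.+1).
have mG k : measurable (G k).
  by apply: measurableI; [apply: mFJ; apply: mBu | exact: mS].
apply: (@le_trans _ _ (\sum_(0 <= k < L) pr P (G k))).
  apply: ler_sum_nat => k _.
  rewrite mulrA [pr P (FJ J B) * _]mulrC.
  have -> : qk k.+1 * pr P (FJ J B) = pr P (FJ (i :: J) (upd B i (Ck k.+1))).
    rewrite pr_indep //; last exact: mCk.
    by congr (_ * _); rewrite /qk /pr (same i (mCk k.+1)).
  apply: IH => //.
  - by rewrite /= iJ uJ.
  - move=> j jI; rewrite in_cons negb_or dIJ ?andbT; last by rewrite in_cons jI orbT.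
    by apply: contraNneq iI => <-.
rewrite -pr_bigU //.
- apply: pr_le.
  + by apply: bigsetU_measurable => k _.
  + by apply: measurableI; [exact: mFJ | exact: mS].
  move=> t /in_bigU [k]; rewrite mem_index_iota => /andP[_ kL] [Ft St].
  move: Ft; rewrite FJ_upd // => -[Ckt Ft]; split => //.
  rewrite /Sev /= big_cons.
  have h1 := Ck_ge kL Ckt.
  have : (m <= k.+1 + (m - k.+1))%N by rewrite -leq_subLR.
  rewrite -(ler_nat R) natrD => h; apply: (le_trans h); apply: lerD => //.
- exact: iota_uniq.
- move=> k k'; rewrite !mem_index_iota => /andP[_ kL] /andP[_ k'L] kk'.
  apply/seteqP; split => // t [[Ft _] [Ft' _]].
  move: Ft Ft'; rewrite !FJ_upd // => -[a _] [b _].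
  have kk : k.+1 != k'.+1 by rewrite eqSS.
  by have := Ck_disj kL k'L kk; move/seteqP => [+ _] => /(_ (xis i t) (conj a b)).
Qed.

End Prob.

Lemma bigU_in (T : Type) (s : seq nat) (G : nat -> set T) k t :
  k \in s -> G k t -> (\big[setU/set0]_(k <- s) G k) t.
Proof.
elim: s => [|a s IH] //; rewrite in_cons big_cons => /orP[/eqP <-|ks] Gt.
  by left.
by right; apply: IH.
Qed.

Unset Implicit Arguments.
Set Strict Implicit.

Theorem proposition4p7 (R : realType) (V : finType) (E : rel V) (alpha : R)
    (d0 : measure_display) (T0 : measurableType d0) (P0 : probability T0 R)
    (xi : T0 -> R)
    (d : measure_display) (T : measurableType d) (P : probability T R)
    (xis : nat -> T -> R) :
  symmetric E -> irreflexive E ->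
  measurable_fun setT xi -> (forall t, xi t \is a Num.int) ->
  cycle_length_bounded_by E alpha P0 xi ->
  (forall n, measurable_fun setT (xis n)) ->
  (forall n, same_distribution P (xis n) P0 xi) ->
  mutually_independent P xis ->
  forall (A : {set V}) (l : nat),
    ((PU E alpha [set: V] (fun s => l <= #|Or s A|)%N)%:E
      <= P [set t | (l%:R <= \sum_(1 <= i < #|A|.+1) xis i t)%R])%E.
Proof.
move=> _ _ mxi xint hb mxis same indep A l.
pose L := l.+1.
pose q := qk L P0 xi.
have q_ge0 k : 0 <= q k by apply: pr_ge0.
have tail : forall j (U : {set V}) (x : V), (j < L)%N -> x \in U ->
    PU E alpha U (fun s => (j.+1 <= #|porbit s x|)%N) <= Tq q L j.
  move=> j U x jL xU.
  have h := hb j.+1 (ltn0Sn j) U x xU.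
  have mX : measurable [set t | j.+1%:R <= xi t].
    by have := mxi measurableT _ (mray j.+1%:R); rewrite setTI.
  rewrite (prE P0 mX) lee_fin in h; apply: (le_trans h).
  rewrite /Tq /q /qk -pr_bigU.
  - apply: pr_le => //.
      by apply: bigsetU_measurable => k _; have := mxi measurableT _ (mCk L k.+1); rewrite setTI.
    move=> t /= jt.
    have xn : xi t \is a Num.nat.
      by rewrite natrEint xint /=; apply: le_trans jt.
    case/natrP: xn => n xn; rewrite xn ler_nat in jt.
    case: (ltnP n L) => nL.
      apply: (@bigU_in _ _ _ n.-1).
        by rewrite mem_index_iota; apply/andP; split; lia.
      by rewrite /= (ltn_predK jt) /Ck nL xn.
    apply: (@bigU_in _ _ _ l).
      by rewrite mem_index_iota; apply/andP; split; lia.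
    by rewrite /Ck ltnn /= xn ler_nat.
  - exact: iota_uniq.
  - by move=> k; have := mxi measurableT _ (mCk L k.+1); rewrite setTI.
  - move=> k k'; rewrite !mem_index_iota => /andP[_ kL] /andP[_ k'L] kk'.
    have kk : k.+1 != k'.+1 by rewrite eqSS.
    apply/seteqP; split => // t [a b].
    by have := Ck_disj R kL k'L kk; move/seteqP => [+ _] => /(_ (xi t) (conj a b)).
have key : PU E alpha [set: V] (fun s => (l <= #|Or s A|)%N) <= Dn q L #|A| l.
  case: (set_0Vmem A) => [A0 | [x xA]].
    by rewrite A0 cards0; apply: disc0.
  have T0q : 1 <= Tq q L 0.
    have h0 := tail 0%N (finset.setT : {set V}) x (ltn0Sn l) (finset.in_setT x).
    have e : PU E alpha (finset.setT : {set V}) (fun s => (0 < #|porbit s x|)%N) = 1.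
      by rewrite PU_T // => s _; rewrite lt0n card_porbit_neq0.
    by rewrite -e.
  by apply: (disc q_ge0 T0q tail) => //; apply: subsetT.
have ps := prob_side L mxis same indep (iota_uniq 1 (#|A|.+1 - 1)) (J := [::])
  (B := fun _ => setT) l isT (fun _ _ => isT) (fun _ => measurableT).
have e1 : FJ xis [::] (fun _ => setT) = setT by rewrite /FJ big_nil.
rewrite e1 setTI /pr probability_setT mul1r size_iota subn1 /= in ps.
rewrite (prE P (mS mxis (index_iota 1 #|A|.+1) l)) lee_fin.

have -> : index_iota 1 #|A|.+1 = iota 1 #|A| by rewrite /index_iota subn1.
rewrite /pr; apply: (le_trans key); exact: ps.
Qed.
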